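(* Let $X$ be a nonempty set and $d:X\times X\to[0,\infty)$ a triangular symmetric on $X$. Let $(x_n;n\ge 0)$ be a sequence in $X$ which is $0d$-semi-Cauchy but not $0d$-Cauchy, and let $Q$ be a denumerable subset of $(0,\infty)$. Then there exist $\varepsilon\in(0,\infty)\setminus Q$, an index $j(\varepsilon)\in\mathbb{N}$, and two sequences of natural numbers $(m(j);j\ge 0)$, $(n(j);j\ge 0)$ such that: (i) $j\le m(j)<n(j)$ and $d(x_{m(j)},x_{n(j)})\ge\varepsilon$ for all $j\ge 0$; (ii) $n(j)-m(j)\ge 2$ and $d(x_{m(j)},x_{n(j)-1})<\varepsilon$ for all $j\ge j(\varepsilon)$; (iii) $\lim_{j\to\infty} d(x_{m(j)+p},x_{n(j)+q})=\varepsilon$ for all $p,q\in\{0,1\}$.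
   Context: A symmetric on $X$ is a map $d:X\times X\to[0,\infty)$ with $d(x,y)=d(y,x)$ for all $x,y\in X$. It is triangular if $d(x,z)\le d(x,y)+d(y,z)$ for all $x,y,z\in X$. A sequence $(x_n)$ in $X$ is $0d$-Cauchy if for every $\varepsilon>0$ there is $j$ such that $j\le m<n$ implies $d(x_m,x_n)<\varepsilon$; it is $0d$-semi-Cauchy if $d(x_n,x_{n+1})\to 0$ as $n\to\infty$. ''Denumerable'' means countable. *)

(* Defs.v *)
From Stdlib Require Import Reals.
Open Scope R_scope.

Definition symmetric_on {X : Type} (d : X -> X -> R) : Prop :=
  (forall x y, 0 <= d x y) /\ (forall x y, d x y = d y x).

Definition triangular {X : Type} (d : X -> X -> R) : Prop :=
  forall x y z, d x z <= d x y + d y z.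

Definition zero_d_Cauchy {X : Type} (d : X -> X -> R) (x : nat -> X) : Prop :=
  forall eps, 0 < eps -> exists j : nat,
    forall m n : nat, (j <= m)%nat -> (m < n)%nat -> d (x m) (x n) < eps.

Definition zero_d_semi_Cauchy {X : Type} (d : X -> X -> R) (x : nat -> X) : Prop :=
  Un_cv (fun n => d (x n) (x (S n))) 0.

(* denumerable = countable (finite or countably infinite):
   there is an injection of the subset into nat. *)
Definition countable_set (Q : R -> Prop) : Prop :=
  exists f : {q : R | Q q} -> nat, forall a b, f a = f b -> a = b.

(* Main.v *)
Require Import Defs.
From Stdlib Require Import Reals Lra Lia Classical ClassicalEpsilon.
Open Scope R_scope.

Definition step (a b y : R) : R * R :=
  if Rle_dec y ((a + b) / 2) then (a + 2 * (b - a) / 3, b) else (a, a + (b - a) / 3).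

Lemma step_spec a b y : a < b ->
  a <= fst (step a b y) /\ fst (step a b y) < snd (step a b y) /\
  snd (step a b y) <= b /\ (y < fst (step a b y) \/ snd (step a b y) < y).
Proof.
  intros H; unfold step; destruct (Rle_dec y ((a + b) / 2)); simpl; lra.
Qed.

Fixpoint Iv (h : nat -> R) (a b : R) (n : nat) : R * R :=
  match n with
  | O => (a, b)
  | S k => step (fst (Iv h a b k)) (snd (Iv h a b k)) (h k)
  end.

Lemma avoid (h : nat -> R) a b : a < b ->
  exists c, a <= c <= b /\ forall n, c <> h n.
Proof.
  intros Hab.
  assert (Hlt : forall n, fst (Iv h a b n) < snd (Iv h a b n)).
  { induction n; simpl; [lra|]. apply (step_spec _ _ (h n) IHn). }
  assert (Hs : forall n, fst (Iv h a b n) <= fst (Iv h a b (S n)) /\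
                         snd (Iv h a b (S n)) <= snd (Iv h a b n)).
  { intro n; simpl; pose proof (step_spec _ _ (h n) (Hlt n)); lra. }
  assert (Hmon : forall n k, (n <= k)%nat -> fst (Iv h a b n) <= fst (Iv h a b k) /\
                         snd (Iv h a b k) <= snd (Iv h a b n)).
  { intros n k Hk; induction Hk; [lra|]. pose proof (Hs m); lra. }
  assert (Hab2 : forall k n, fst (Iv h a b k) <= snd (Iv h a b n)).
  { intros k n. destruct (Hmon k (max k n) ltac:(lia)).
    destruct (Hmon n (max k n) ltac:(lia)). pose proof (Hlt (max k n)). lra. }
  destruct (completeness (fun r => exists k, r = fst (Iv h a b k))) as [c [Hub Hl]].
  { exists b; intros r [k ->]. pose proof (Hab2 k O); simpl in *; lra. }
  { exists a; exists O; reflexivity. }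
  assert (Hin : forall n, fst (Iv h a b n) <= c <= snd (Iv h a b n)).
  { intro n; split.
    - apply Hub; exists n; reflexivity.
    - apply Hl; intros r [k ->]; apply Hab2. }
  exists c; split.
  - pose proof (Hin O); simpl in *; lra.
  - intros n E. pose proof (Hin (S n)). simpl in H.
    pose proof (step_spec _ _ (h n) (Hlt n)). lra.
Qed.

Lemma enum_of_countable (Q : R -> Prop) : countable_set Q ->
  exists h : nat -> R, forall q, Q q -> exists n, h n = q.
Proof.
  intros [f Hf].
  exists (fun n => match excluded_middle_informative (exists s, f s = n) with
           | left H => proj1_sig (proj1_sig (constructive_indefinite_description _ H))
           | right _ => 0 end).
  intros q Hq. exists (f (exist _ q Hq)).
  destruct excluded_middle_informative as [H|H].
  - destruct (constructive_indefinite_description _ H) as [s Hs]; simpl.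
    apply Hf in Hs; subst s; reflexivity.
  - exfalso; apply H; eexists; reflexivity.
Qed.

Lemma least (P : nat -> Prop) : (exists n, P n) -> exists n, P n /\ forall k, (k < n)%nat -> ~ P k.
Proof.
  intros [n Hn]. revert Hn. induction n as [n IH] using (well_founded_induction Wf_nat.lt_wf). intros Hn.
  destruct (classic (exists k, (k < n)%nat /\ P k)) as [[k [Hk Pk]]|H].
  - exact (IH k Hk Pk).
  - exists n; split; auto. intros k Hk Pk; apply H; eauto.
Qed.

Lemma cv_aux (u : nat -> R) (l : R) (a b c : nat -> nat) (dl : nat -> R) (J : nat) :
  Un_cv dl 0 -> (forall j, (j <= a j)%nat /\ (j <= b j)%nat /\ (j <= c j)%nat) ->
  (forall j, (J <= j)%nat -> Rabs (u j - l) <= dl (a j) + dl (b j) + dl (c j)) ->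
  Un_cv u l.
Proof.
  intros Hd Hi Hb e He.
  destruct (Hd (e/3) ltac:(lra)) as [N HN].
  exists (max N J). intros j Hj. unfold Rdist in *.
  destruct (Hi j) as [Ha [Hbb Hc]].
  pose proof (HN (a j) ltac:(lia)). pose proof (HN (b j) ltac:(lia)).
  pose proof (HN (c j) ltac:(lia)). pose proof (Hb j ltac:(lia)).
  rewrite Rminus_0_r in *.
  pose proof (Rle_abs (dl (a j))). pose proof (Rle_abs (dl (b j))).
  pose proof (Rle_abs (dl (c j))). lra.
Qed.

Lemma abs_btw a b : Rabs a <= b -> -b <= a <= b.
Proof. intro H. pose proof (Rle_abs a). pose proof (Rle_abs (-a)). rewrite Rabs_Ropp in *. lra. Qed.

Lemma shiftL {X : Type} (d : X -> X -> R) : symmetric_on d -> triangular d ->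
  forall a b c, Rabs (d a c - d b c) <= d a b.
Proof.
  intros [Hp Hs] Ht a b c. pose proof (Ht a b c). pose proof (Ht b a c).
  rewrite (Hs b a) in *. apply Rabs_le; split; lra.
Qed.

Lemma shiftR {X : Type} (d : X -> X -> R) : symmetric_on d -> triangular d ->
  forall a b c, Rabs (d c a - d c b) <= d a b.
Proof.
  intros Hsy Ht a b c. destruct Hsy as [Hp Hs].
  rewrite (Hs c a), (Hs c b). apply (shiftL d); [split|]; auto.
Qed.

Theorem lemma1 (X : Type) (x0 : X) (d : X -> X -> R)
  (Hsym : symmetric_on d) (Htri : triangular d)
  (x : nat -> X)
  (Hsemi : zero_d_semi_Cauchy d x) (Hnc : ~ zero_d_Cauchy d x)
  (Q : R -> Prop) (HQpos : forall q, Q q -> 0 < q) (HQc : countable_set Q) :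
  exists (eps : R) (jeps : nat) (m n : nat -> nat),
    0 < eps /\ ~ Q eps /\
    (forall j, (j <= m j)%nat /\ (m j < n j)%nat /\ eps <= d (x (m j)) (x (n j))) /\
    (forall j, (jeps <= j)%nat ->
        (2 <= n j - m j)%nat /\ d (x (m j)) (x (n j - 1)%nat) < eps) /\
    (forall p q : nat, (p <= 1)%nat -> (q <= 1)%nat ->
        Un_cv (fun j => d (x (m j + p)%nat) (x (n j + q)%nat)) eps).
Proof.
  assert (He0 : exists e0, 0 < e0 /\ forall j, exists m n, (j <= m)%nat /\ (m < n)%nat /\
            e0 <= d (x m) (x n)).
  { apply NNPP; intro H; apply Hnc; intros e He.
    apply NNPP; intro H2; apply H; exists e; split; auto; intro j.
    apply NNPP; intro H3; apply H2; exists j; intros m n Hm Hn.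
    apply Rnot_le_lt; intro H4; apply H3; eauto. }
  destruct He0 as [e0 [He0 Hj]].
  destruct (enum_of_countable Q HQc) as [h Hh].
  destruct (avoid h (e0/2) e0 ltac:(lra)) as [eps [Heps Hnh]].
  assert (HnQ : ~ Q eps) by (intro HQ; destruct (Hh _ HQ) as [k Hk]; exact (Hnh k (eq_sym Hk))).
  assert (Hex : forall j, exists mn : nat * nat, (j <= fst mn)%nat /\ (fst mn < snd mn)%nat /\
     eps <= d (x (fst mn)) (x (snd mn)) /\
     forall k, (fst mn < k < snd mn)%nat -> d (x (fst mn)) (x k) < eps).
  { intro j. destruct (Hj j) as [m [n [H1 [H2 H3]]]].
    destruct (least (fun k => (m < k)%nat /\ eps <= d (x m) (x k))) as [k [[Hk1 Hk2] Hk3]].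
    { exists n; split; auto; lra. }
    exists (m, k); simpl; repeat split; auto; try lia.
    intros k' Hk'. apply Rnot_le_lt; intro; apply (Hk3 k'); [lia|split; [lia|auto]]. }
  destruct (choice _ Hex) as [mn Hmn].
  pose (dl := fun k => d (x k) (x (S k))).
  destruct Hsym as [Hp Hs].
  destruct (Hsemi eps ltac:(lra)) as [N HN].
  assert (HdN : forall k, (k >= N)%nat -> dl k < eps).
  { intros k Hk. specialize (HN k Hk). unfold Rdist in HN. rewrite Rminus_0_r in HN.
    pose proof (Rle_abs (d (x k) (x (S k)))). unfold dl; lra. }
  assert (Hii : forall j, (N <= j)%nat -> (2 <= snd (mn j) - fst (mn j))%nat /\
      d (x (fst (mn j))) (x (snd (mn j) - 1)%nat) < eps).
  { intros j Hj1. destruct (Hmn j) as [H1 [H2 [H3 H4]]].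
    assert (snd (mn j) <> S (fst (mn j))).
    { intro E. pose proof (HdN (fst (mn j)) ltac:(lia)). unfold dl in H. rewrite <- E in H. lra. }
    split; [lia|]. apply H4; lia. }
  exists eps, N, (fun j => fst (mn j)), (fun j => snd (mn j)).
  split; [lra|]. split; [auto|]. split.
  { intro j; destruct (Hmn j) as [H1 [H2 [H3 H4]]]; auto. }
  split; [exact Hii|].
  intros p q Hpq Hq.
  assert (HP : forall a z, Rabs (d (x (a + p)%nat) z - d (x a) z) <= dl a).
  { intros a z. destruct p as [|[|]]; try lia.
    - rewrite Nat.add_0_r, Rminus_diag, Rabs_R0. apply Hp.
    - replace (a + 1)%nat with (S a) by lia. unfold dl. rewrite (Hs (x a) (x (S a))).
      apply shiftL; [split|]; auto. }
  assert (HQ' : forall a z, Rabs (d z (x (a + q)%nat) - d z (x a)) <= dl a).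
  { intros a z. destruct q as [|[|]]; try lia.
    - rewrite Nat.add_0_r, Rminus_diag, Rabs_R0. apply Hp.
    - replace (a + 1)%nat with (S a) by lia. unfold dl. rewrite (Hs (x a) (x (S a))).
      apply shiftR; [split|]; auto. }
  apply (cv_aux _ _ (fun j => fst (mn j)) (fun j => snd (mn j) - 1)%nat (fun j => snd (mn j)) dl N).
  - exact Hsemi.
  - intro j; destruct (Hmn j); lia.
  - intros j Hj1. destruct (Hmn j) as [H1 [H2 [H3 H4]]]. destruct (Hii j Hj1) as [H5 H6].
    set (m := fst (mn j)) in *. set (n := snd (mn j)) in *.
    pose proof (HP m (x (n + q)%nat)). pose proof (HQ' n (x m)).
    pose proof (Htri (x m) (x (n - 1)%nat) (x n)).
    replace n with (S (n - 1)) in H7 at 3 by lia.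
    assert (d (x (n - 1)%nat) (x (S (n - 1))) = dl (n - 1)%nat) by reflexivity.
    replace (S (n - 1)) with n in * by lia.
    apply Rabs_le. apply abs_btw in H, H0. split; lra.
Qed.
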